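(* Let $T_2$ be the tree with vertices $w,x,y,z,u_1,a_1,b_1$ and edges $wx,xy,yz,zu_1,u_1a_1,u_1b_1$, and let $T_3$ be the tree obtained from $T_2$ by adding vertices $u_2,a_2,b_2$ and edges $zu_2,u_2a_2,u_2b_2$. Let $v$ be a vertex of $T_2$, $S$ a $\Delta_S$-star with $\Delta_S\ge 3$, and $G=T_2\rhd_v S$ a graph of order $n$ and maximum degree $\Delta\ge 3$ with $G\not\cong T_3$. Then $\gamma^{\rm ID}(G)\le \left(\frac{\Delta-1}{\Delta}\right)n$.
   Context: An identifying code of a graph $G$ is a set $C\subseteq V(G)$ such that every vertex $v$ has $N[v]\cap C\neq\emptyset$ and for all distinct $u,v$, $N[u]\cap C \ne N[v]\cap C$, where $N[v]$ is the closed neighborhood; $\gamma^{\rm ID}(G)$ is its minimum size. A $k$-star is $K_{1,k}$. For a graph $G'$, a vertex $v$ of $G'$ and a star $S$, $G'\rhd_v S$ is the graph obtained from the disjoint union of $G'$ and $S$ by identifying $v$ with a leaf of $S$. *)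

(* Defs.v *)
From mathcomp Require Import all_boot all_order all_algebra.
Set Implicit Arguments. Unset Strict Implicit. Unset Printing Implicit Defensive.

Section Graphs.
Variable V : finType.
Implicit Types (e : rel V).

Definition simple_graph e := symmetric e /\ irreflexive e.

Definition nbhd e (x : V) : {set V} := [set y | e x y].
Definition cnbhd e (x : V) : {set V} := x |: nbhd e x.

Definition degree e (x : V) : nat := #|nbhd e x|.
Definition max_degree e : nat := \max_(x : V) degree e x.

Definition is_id_code e (C : {set V}) : bool :=
  [forall x, cnbhd e x :&: C != set0] &&
  [forall x, forall y, (x != y) ==> (cnbhd e x :&: C != cnbhd e y :&: C)].

(* gamma^ID: minimum size of an identifying code (|V|+1 if none exists) *)
Definition gammaID e : nat :=
  \big[minn/#|V|.+1]_(C : {set V} | is_id_code e C) #|C|.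
End Graphs.

Definition graph_iso (V1 V2 : finType) (e1 : rel V1) (e2 : rel V2) : Prop :=
  exists f : V1 -> V2, bijective f /\ forall a b, e2 (f a) (f b) = e1 a b.

(* G' |>_v S where S = K_{1,k}: vertex set V + 'I_k; inr 0 is the centre of
   the star, inr i (0 < i < k) are the other k-1 leaves, and the remaining
   leaf of S is identified with v. *)
Definition attach_star (V : finType) (e : rel V) (v : V) (k : nat)
  : rel (V + 'I_k)%type :=
  fun a b =>
    match a, b with
    | inl x, inl y => e x y
    | inl x, inr i => (x == v) && (val i == 0)
    | inr i, inl x => (x == v) && (val i == 0)
    | inr i, inr j => ((val i == 0) && (val j != 0)) || ((val j == 0) && (val i != 0))
    end.

Definition edge_rel (n : nat) (E : seq (nat * nat)) : rel 'I_n :=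
  fun a b => ((val a, val b) \in E) || ((val b, val a) \in E).

(* T2: w=0, x=1, y=2, z=3, u1=4, a1=5, b1=6 *)
Definition T2_edges : seq (nat * nat) :=
  [:: (0,1); (1,2); (2,3); (3,4); (4,5); (4,6)].
Definition T2 : rel 'I_7 := @edge_rel 7 T2_edges.

(* T3: T2 plus u2=7, a2=8, b2=9 with edges z u2, u2 a2, u2 b2 *)
Definition T3 : rel 'I_10 :=
  @edge_rel 10 (T2_edges ++ [:: (3,7); (7,8); (7,9)]).

Arguments attach_star {V} e v k.
Arguments edge_rel n E.

(* Main.v *)
Require Import Defs.
From mathcomp Require Import all_boot all_order all_algebra.
From mathcomp Require Import zify.
Import Order.TTheory GRing.Theory Num.Theory.
Set Implicit Arguments. Unset Strict Implicit. Unset Printing Implicit Defensive.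

Lemma cnE (T : finType) (e : rel T) x c : (c \in cnbhd e x) = (c == x) || e x c.
Proof. by rewrite /cnbhd /nbhd !inE. Qed.

Lemma id_codeP (T : finType) (e : rel T) (C : {set T}) :
  (forall x, exists2 c, c \in C & c \in cnbhd e x) ->
  (forall x y, x != y -> exists2 c, c \in C & (c \in cnbhd e x) != (c \in cnbhd e y)) ->
  is_id_code e C.
Proof.
move=> H1 H2; apply/andP; split.
  apply/forallP=> x; have [c cC cx] := H1 x; apply/set0Pn; exists c.
  by rewrite inE cx cC.
apply/forallP=> x; apply/forallP=> y; apply/implyP=> xy.
have [c cC cd] := H2 x y xy; apply/negP => /eqP E; move: cd.
have : (c \in cnbhd e x :&: C) = (c \in cnbhd e y :&: C) by rewrite E.
by rewrite !inE cC !andbT => ->; rewrite eqxx.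
Qed.

Lemma bigmin_le (I : eqType) (r : seq I) (P : pred I) (F : I -> nat) idx i0 :
  i0 \in r -> P i0 -> (\big[minn/idx]_(i <- r | P i) F i <= F i0)%N.
Proof.
elim: r => [//|a r IH]; rewrite inE big_cons => /orP [/eqP <- -> | H Pi].
  exact: geq_minl.
case: (P a); last exact: IH.
by rewrite geq_min IH ?orbT.
Qed.

Lemma gammaID_le (T : finType) (e : rel T) (C : {set T}) :
  is_id_code e C -> (gammaID e <= #|C|)%N.
Proof.
move=> HC; rewrite /gammaID; apply: bigmin_le => //; by rewrite mem_index_enum.
Qed.

Definition T2n (a b : nat) := ((a, b) \in T2_edges) || ((b, a) \in T2_edges).
Definition memn (a d : nat) := (d == a) || T2n a d.

Definition c1 vn (Dl : seq nat) :=
  all (fun a => all (fun b => (a == b) || has (fun d => memn a d != memn b d) Dl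
       || ((a == vn) != (b == vn))) (iota 0 7)) (iota 0 7).
Definition c2 vn (Dl : seq nat) := has (fun d => memn vn d) Dl.
Definition c3 vn (Dl : seq nat) :=
  all (fun a => (a == vn) || has (fun d => memn a d) Dl) (iota 0 7).

Definition code m (Dl : seq nat) : {set 'I_7 + 'I_(m.+3)} :=
  [set x | match x with inl a => val a \in Dl | inr i => val i != 1%N end].

Section Gen.
Variables (m vn : nat) (Hv : (vn < 7)%N) (Dl : seq nat).
Hypotheses (H0 : all (fun d => d < 7)%N Dl) (H1 : c1 vn Dl) (H2 : c2 vn Dl)
  (H3 : c3 vn Dl) (H4 : (vn \in Dl) || (0 < m)%N).
Let e := attach_star T2 (Ordinal Hv) m.+3.
Let C := code m Dl.

Lemma memLL (a d : 'I_7) : (inl d \in cnbhd e (inl a)) = memn (val a) (val d).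
Proof. by rewrite cnE. Qed.
Lemma memLR (a : 'I_7) (j : 'I_(m.+3)) :
  (inr j \in cnbhd e (inl a)) = (val a == vn) && (val j == 0%N).
Proof. by rewrite cnE. Qed.
Lemma memRL (i : 'I_(m.+3)) (d : 'I_7) :
  (inl d \in cnbhd e (inr i)) = (val d == vn) && (val i == 0%N).
Proof. by rewrite cnE. Qed.
Lemma memRR (i j : 'I_(m.+3)) :
  (inr j \in cnbhd e (inr i)) =
  [|| val j == val i, (val i == 0%N) && (val j != 0%N) | (val j == 0%N) && (val i != 0%N)].
Proof. by rewrite cnE. Qed.
Lemma inCL d : (inl d \in C) = (val d \in Dl). Proof. by rewrite inE. Qed.
Lemma inCR i : (inr i \in C) = (val i != 1%N). Proof. by rewrite inE. Qed.

Definition sep x y := exists2 c, c \in C & (c \in cnbhd e x) != (c \in cnbhd e y).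
Lemma sepC x y : sep x y -> sep y x.
Proof. by case=> c cC H; exists c => //; rewrite eq_sym. Qed.

Let c0 := @Ordinal m.+3 0 isT.
Let l2 := @Ordinal m.+3 2 isT.

Lemma sepLL a b : a != b -> sep (inl a) (inl b).
Proof.
move=> ab; move/allP: H1 => /(_ (val a)); rewrite mem_iota (ltn_ord a) => /(_ isT).
move/allP => /(_ (val b)); rewrite mem_iota (ltn_ord b) => /(_ isT).
case/orP => [/orP [|/hasP [d dD dne]]|hv].
- by move/eqP/val_inj => E; rewrite E eqxx in ab.
- have d7 : (d < 7)%N by move/allP: H0 => /(_ d dD).
  exists (inl (Ordinal d7)); first by rewrite inCL.
  by rewrite !memLL.
- exists (inr c0); first by rewrite inCR.
  by rewrite !memLR /= !andbT.
Qed.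

Lemma sepLR a i : sep (inl a) (inr i).
Proof.
have [i0|[i1|i2]] : val i = 0%N \/ val i = 1%N \/ (2 <= val i)%N by lia.
- case av: (val a == vn).
    exists (inr l2); first by rewrite inCR.
    by rewrite memLR memRR i0 av.
  exists (inr c0); first by rewrite inCR.
  by rewrite memLR memRR i0 av.
- case av: (val a == vn).
    case/hasP: H2 => d dD dv.
    have d7 : (d < 7)%N by move/allP: H0 => /(_ d dD).
    exists (inl (Ordinal d7)); first by rewrite inCL.
    by rewrite memLL memRL i1 andbF /= (eqP av) dv.
  exists (inr c0); first by rewrite inCR.
  by rewrite memLR memRR i1 av.
- exists (inr i); first by rewrite inCR; apply/eqP => E; rewrite E in i2.
  have iz : (val i == 0%N) = false by apply/eqP => E; rewrite E in i2.
  by rewrite memLR memRR eqxx /= iz andbF.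
Qed.

Lemma sep0big i j : val i = 0%N -> (2 <= val j)%N -> sep (inr i) (inr j).
Proof.
move=> i0 j2.
have jn0 : (val j == 0%N) = false by apply/eqP => E; rewrite E in j2.
case vD: (vn \in Dl).
  exists (inl (Ordinal Hv)); first by rewrite inCL.
  by rewrite !memRL /= eqxx i0 jn0.
have m0 : (0 < m)%N by move: H4; rewrite vD.
pose l := if val j == 2%N then 3%N else 2%N.
have l3 : (l < m.+3)%N by rewrite /l; case: ifP; lia.
exists (inr (Ordinal l3)); first by rewrite inCR /l /=; case: (val j =P 2%N).
rewrite !memRR /= i0 jn0 /l.
case: (val j =P 2%N) => [->|/eqP jn2] //=.
move: jn2; rewrite /=; lia.
Qed.

Lemma sepXbig i j : val i != val j -> (val i != 0%N) -> (2 <= val j)%N -> sep (inr i) (inr j).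
Proof.
move=> ij in0 j2.
have jn0 : (val j == 0%N) = false by apply/eqP => E; rewrite E in j2.
exists (inr j); first by rewrite inCR; apply/eqP => E; rewrite E in j2.
rewrite !memRR eqxx /= (negbTE in0) jn0 /=; move: ij; rewrite /=; lia.
Qed.

Lemma sepRR i j : i != j -> sep (inr i) (inr j).
Proof.
move=> ij.
have vij : val i != val j by apply: contra ij => /eqP/val_inj ->.
have [i0|[i1|i2]] : val i = 0%N \/ val i = 1%N \/ (2 <= val i)%N by lia.
- have [j0|[j1|j2]] : val j = 0%N \/ val j = 1%N \/ (2 <= val j)%N by lia.
  + by rewrite i0 j0 in vij.
  + exists (inr l2); first by rewrite inCR.
    by rewrite !memRR i0 j1.
  + exact: sep0big.
- have [j0|[j1|j2]] : val j = 0%N \/ val j = 1%N \/ (2 <= val j)%N by lia.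
  + exists (inr l2); first by rewrite inCR.
    by rewrite !memRR i1 j0.
  + by rewrite i1 j1 in vij.
  + by apply: sepXbig => //; rewrite i1.
- have [j0|[j1|j2]] : val j = 0%N \/ val j = 1%N \/ (2 <= val j)%N by lia.
  + by apply: sepC; apply: sep0big.
  + by apply: sepC; apply: sepXbig; move: i2 j1; rewrite /=; lia.
  + by apply: sepXbig => //; move: i2; rewrite /=; lia.
Qed.

Lemma gen_id : is_id_code e C.
Proof.
apply: id_codeP.
  case=> [a|i].
    move/allP: H3 => /(_ (val a)); rewrite mem_iota (ltn_ord a) => /(_ isT).
    case/orP => [av|/hasP [d dD dv]].
      exists (inr c0); first by rewrite inCR.
      by rewrite memLR av.
    have d7 : (d < 7)%N by move/allP: H0 => /(_ d dD).
    exists (inl (Ordinal d7)); first by rewrite inCL.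
    by rewrite memLL.
  exists (inr c0); first by rewrite inCR.
  rewrite memRR /=; case: (val i =P 0%N) => [->|/eqP]; rewrite /= ?orbT //; lia.
case=> [a|i] [b|j] xy.
- by apply: sepLL; apply: contra xy => /eqP ->.
- exact: sepLR.
- exact/sepC/sepLR.
- by apply: sepRR; apply: contra xy => /eqP ->.
Qed.

End Gen.
Lemma card_code m Dl : (#|code m Dl| <= size Dl + m.+2)%N.
Proof.
pose A := [set a : 'I_7 | val a \in Dl].
pose B := [set~ (@Ordinal m.+3 1 isT)].
have sub : code m Dl \subset (inl @: A) :|: (inr @: B).
  apply/subsetP => -[a|i]; rewrite inE => H; rewrite inE.
    by apply/orP; left; apply: imset_f; rewrite inE.
  apply/orP; right; apply: imset_f; rewrite !inE; apply: contra H => /eqP -> //.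
apply: (leq_trans (subset_leq_card sub)).
rewrite cardsU; apply: (leq_trans (leq_subr _ _)).
rewrite !card_imset; try by move=> x y [].
rewrite cardsC1 card_ord /=; rewrite leq_add2r.
have sA : A \subset ([seq inord d | d <- Dl] : seq 'I_7).
  apply/subsetP => a; rewrite inE => H.
  by rewrite -(inord_val a); apply: map_f.
by apply: (leq_trans (subset_leq_card sA)); rewrite (leq_trans (card_size _)) ?size_map.
Qed.

Lemma deg_ge (v : 'I_7) m : (m.+3 <= max_degree (attach_star T2 v m.+3))%N.
Proof.
pose c0 := @Ordinal m.+3 0 isT.
apply: (leq_trans _ (leq_bigmax (inr c0))).
rewrite /degree.
have sub : inl v |: (inr @: [set~ c0]) \subset nbhd (attach_star T2 v m.+3) (inr c0).
  apply/subsetP => x; rewrite !inE => /orP [/eqP ->|/imsetP [j]]; first by rewrite /= eqxx.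
  rewrite !inE => jc ->; rewrite /=.
  by apply/orP; left; apply: contra jc => /eqP E; apply/eqP/val_inj.
apply: (leq_trans _ (subset_leq_card sub)).
rewrite cardsU1 card_imset; last by move=> x y [].
rewrite cardsC1 card_ord.
have -> : inl v \notin inr @: [set~ c0] by apply/imsetP => -[j _].
by [].
Qed.
Definition v3 : 'I_7 := @Ordinal 7 3 isT.
Definition fiso (x : 'I_7 + 'I_3) : 'I_10 :=
  match x with inl a => widen_ord (isT : (7 <= 10)%N) a | inr i => inord (7 + val i) end.
Definition giso (i : 'I_10) : 'I_7 + 'I_3 :=
  if (val i < 7)%N then inl (inord i) else inr (inord (val i - 7)).
Lemma iso_e a b : T3 (fiso a) (fiso b) = attach_star T2 v3 3 a b.
Proof.
case: a => [[[|[|[|[|[|[|[|n]]]]]]] Ha]|[[|[|[|n]]] Ha]] //;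
case: b => [[[|[|[|[|[|[|[|n']]]]]]] Hb]|[[|[|[|n']]] Hb]] //.
all: rewrite /fiso /T3 /edge_rel /= ?inordK //.
Qed.
Lemma iso_c1 : cancel fiso giso.
Proof.
case => [[[|[|[|[|[|[|[|n]]]]]]] Ha]|[[|[|[|n]]] Ha]] //; rewrite /fiso /giso /= ?inordK //=;
 congr inl || congr inr; apply: val_inj; rewrite /= ?inordK //.
Qed.
Lemma iso_c2 : cancel giso fiso.
Proof.
case => [[|[|[|[|[|[|[|[|[|[|n]]]]]]]]]] Ha] //; rewrite /fiso /giso /= ; apply: val_inj; rewrite /= ?inordK //.
Qed.
Lemma isoT3 : graph_iso (attach_star T2 v3 3) T3.
Proof.
exists fiso; split; last exact: iso_e.
exists giso; [exact: iso_c1 | exact: iso_c2].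
Qed.

Local Open Scope ring_scope.

Lemma finish (v : 'I_7) m Dl : size Dl = 4%N ->
  is_id_code (attach_star T2 v m.+3) (code m Dl) ->
  let G := attach_star T2 v m.+3 in
  let n := #|{: ('I_7 + 'I_(m.+3))%type}| in
  let Delta := max_degree G in
  (3 <= Delta)%N ->
  ((gammaID G)%:R : rat) <= ((Delta - 1)%:R / Delta%:R) * n%:R.
Proof.
move=> sD Hid G n Delta HD.
have g := gammaID_le Hid; have c := card_code m Dl; have d := deg_ge v m.
rewrite sD in c.
have -> : n = (7 + m.+3)%N by rewrite /n card_sum !card_ord.
rewrite mulrAC ler_pdivlMr ?ltr0n; last by lia.
rewrite -!natrM ler_nat.
rewrite -/G -/Delta in d.
have gl : (gammaID G <= m + 6)%N by apply: (leq_trans g); apply: (leq_trans c); lia.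
apply: (leq_trans (leq_mul gl (leqnn Delta))).
nia.
Qed.

Theorem mainTheorem10 (v : 'I_7) (DeltaS : nat) :
  (3 <= DeltaS)%N ->
  let G := attach_star T2 v DeltaS in
  let n := #|{: ('I_7 + 'I_DeltaS)%type}| in
  let Delta := max_degree G in
  (3 <= Delta)%N ->
  ~ graph_iso G T3 ->
  ((gammaID G)%:R : rat) <= ((Delta - 1)%:R / Delta%:R) * n%:R.
Proof.
case: DeltaS => [|[|[|m]]] // _.
case: v => -[|[|[|[|[|[|[|//]]]]]]] Hv.
- move=> G n Delta HD Hiso.
  apply: (@finish _ m [:: 0; 3; 4; 5]%N) => //; exact: gen_id.
- move=> G n Delta HD Hiso.
  apply: (@finish _ m [:: 1; 2; 5; 6]%N) => //; exact: gen_id.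
- move=> G n Delta HD Hiso.
  apply: (@finish _ m [:: 0; 2; 5; 6]%N) => //; exact: gen_id.
- case: m => [|m] G n Delta HD Hiso.
    exfalso; apply: Hiso; rewrite /G.
    have -> : Ordinal Hv = v3 by apply: val_inj.
    exact: isoT3.
  apply: (@finish _ m.+1 [:: 0; 2; 5; 6]%N) => //; exact: gen_id.
- move=> G n Delta HD Hiso.
  apply: (@finish _ m [:: 0; 2; 4; 5]%N) => //; exact: gen_id.
- move=> G n Delta HD Hiso.
  apply: (@finish _ m [:: 0; 2; 4; 5]%N) => //; exact: gen_id.
- move=> G n Delta HD Hiso.
  apply: (@finish _ m [:: 0; 2; 4; 6]%N) => //; exact: gen_id.
Qed.
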